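(* Let $X$ be a separable completely metrizable space and $T:X\to X$ continuous. Then $T$ is quasi-rigid if and only if $T$ is topologically quasi-rigid.
   Context: $T$ is quasi-rigid with respect to a strictly increasing sequence $(n_k)_{k\in\mathbb{N}}$ of positive integers if there is a dense subset $Y\subset X$ such that $T^{n_k}x\to x$ as $k\to\infty$ for every $x\in Y$; $T$ is quasi-rigid if this holds for some such sequence. $T$ is topologically quasi-rigid with respect to $(n_k)$ if for every non-empty open $U\subset X$ there is $k_U$ with $T^{n_k}(U)\cap U\neq\varnothing$ for all $k\geq k_U$; topologically quasi-rigid means this holds for some such sequence. *)

(* Defs.v *)
From HB Require Import structures.
From mathcomp Require Import all_boot all_order all_algebra.
From mathcomp Require Import all_classical all_reals all_analysis.
From mathcomp Require Import Rstruct Rstruct_topology.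
Set Implicit Arguments. Unset Strict Implicit. Unset Printing Implicit Defensive.
Import Order.TTheory GRing.Theory Num.Theory.
Local Open Scope classical_set_scope.
Local Open Scope ring_scope.

Definition separable_space (X : topologicalType) : Prop :=
  exists D : set X, countable D /\ dense D.

Definition is_metric (X : Type) (d : X -> X -> Rdefinitions.R) : Prop :=
  (forall x y, 0 <= d x y) /\ (forall x y, d x y = 0 <-> x = y) /\
  (forall x y, d x y = d y x) /\ (forall x y z, d x z <= d x y + d y z).

Definition metric_induces_topology (X : topologicalType)
  (d : X -> X -> Rdefinitions.R) : Prop :=
  forall U : set X, open U <->
    (forall x, U x -> exists2 e : Rdefinitions.R, 0 < e &
       forall y, d x y < e -> U y).

Definition metric_complete (X : topologicalType)
  (d : X -> X -> Rdefinitions.R) : Prop :=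
  forall u : nat -> X,
    (forall e : Rdefinitions.R, 0 < e -> exists N, forall m n,
        (N <= m)%N -> (N <= n)%N -> d (u m) (u n) < e) ->
    exists l : X, u @ \oo --> l.

Definition completely_metrizable (X : topologicalType) : Prop :=
  exists d : X -> X -> Rdefinitions.R,
    [/\ is_metric d, metric_induces_topology d & metric_complete d].

Definition incr_pos_seq (n : nat -> nat) : Prop :=
  (0 < n 0)%N /\ (forall k, (n k < n k.+1)%N).

Definition quasi_rigid_wrt (X : topologicalType) (T : X -> X) (n : nat -> nat) :=
  exists Y : set X, dense Y /\
    forall x, Y x -> (fun k => iter (n k) T x) @ \oo --> x.

Definition quasi_rigid (X : topologicalType) (T : X -> X) : Prop :=
  exists n, incr_pos_seq n /\ quasi_rigid_wrt T n.

Definition top_quasi_rigid_wrt (X : topologicalType) (T : X -> X)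
    (n : nat -> nat) : Prop :=
  forall U : set X, open U -> U !=set0 ->
    exists kU : nat, forall k, (kU <= k)%N ->
      (iter (n k) T @` U) `&` U !=set0.

Definition top_quasi_rigid (X : topologicalType) (T : X -> X) : Prop :=
  exists n, incr_pos_seq n /\ top_quasi_rigid_wrt T n.

(* Main.v *)
Require Import Defs.
From mathcomp Require Import all_boot all_classical all_reals all_analysis.
From mathcomp Require Import all_order all_algebra Rstruct Rstruct_topology lra.

Section QR.
Import Order.TTheory GRing.Theory Num.Theory.
Local Open Scope classical_set_scope.
Local Open Scope ring_scope.

Variable X : topologicalType.
Variable d : X -> X -> Rdefinitions.R.
Hypothesis dm : is_metric d.
Hypothesis dtop : metric_induces_topology d.
Hypothesis dcomp : metric_complete d.
Variable T : X -> X.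
Hypothesis Tc : continuous T.

Lemma d_ge0 x y : 0 <= d x y. Proof. by case: dm. Qed.
Lemma d_sym x y : d x y = d y x. Proof. by case: dm => _ [_ []]. Qed.
Lemma d_tri x y z : d x z <= d x y + d y z. Proof. by case: dm => _ [_ [_]]. Qed.
Lemma d_refl x : d x x = 0. Proof. by case: dm => _ [H _]; apply/H. Qed.

Lemma ball_open c r : open [set y | d c y < r].
Proof.
apply/dtop => y /= Hy; exists (r - d c y); first by rewrite subr_gt0.
move=> z Hz /=; have := d_tri c y z; lra.
Qed.

Lemma ball_nbhs c r : 0 < r -> nbhs c [set y | d c y < r].
Proof.
move=> r0; apply: open_nbhs_nbhs; split; first exact: ball_open.
by rewrite /= d_refl.
Qed.

Lemma nbhs_ball x A : nbhs x A -> exists2 e, 0 < e & forall y, d x y < e -> A y.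
Proof.
rewrite nbhsE => -[B [oB Bx] BA].
have [e e0 He] := (proj1 (dtop B) oB) x Bx.
by exists e => // y /He; apply: BA.
Qed.

Lemma cvgP (u : nat -> X) l :
  (forall e, 0 < e -> exists N, forall k, (N <= k)%N -> d l (u k) < e) -> u @ \oo --> l.
Proof.
move=> H A /nbhs_ball [e e0 He]. have [N HN] := H e e0.
by exists N => // k /= Nk; apply: He; apply: HN.
Qed.

Lemma cvgE (u : nat -> X) l : u @ \oo --> l ->
  forall e, 0 < e -> exists N, forall k, (N <= k)%N -> d l (u k) < e.
Proof.
move=> H e e0; have [N _ HN] := H _ (@ball_nbhs l e e0).
by exists N => k Hk; apply: HN.
Qed.

Lemma T_mcont x e : 0 < e -> exists2 de, 0 < de & forall y, d x y < de -> d (T x) (T y) < e.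
Proof.
move=> e0; have /nbhs_ball[de de0 H] := @Tc x _ (@ball_nbhs (T x) e e0).
by exists de => // y /H.
Qed.

Lemma iter_mcont m x e : 0 < e ->
  exists2 de, 0 < de & forall y, d x y < de -> d (iter m T x) (iter m T y) < e.
Proof.
elim: m e => [|m IH] e e0 /=; first by exists e.
have [de1 de10 H1] := @T_mcont (iter m T x) e e0.
have [de de0 H] := IH _ de10.
by exists de => // y /H /H1.
Qed.

Definition strict (f : nat -> nat) := forall k, (f k < f k.+1)%N.

Lemma strict_lt f : strict f -> forall a b, (a < b)%N -> (f a < f b)%N.
Proof.
move=> Hf a b /subnKC <-; elim: (b - a.+1)%N => [|t IH].
  by rewrite addn0; apply: Hf.
by rewrite addnS; apply: ltn_trans IH (Hf _).
Qed.

Lemma strict_ge f : strict f -> forall k, (k <= f k)%N.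
Proof. by move=> Hf; elim=> [|k IH] //; apply: leq_ltn_trans IH (Hf k). Qed.

Lemma step n' : top_quasi_rigid_wrt T n' ->
  forall (c : X) (r : Rdefinitions.R) (kp : nat), 0 < r ->
  exists p : X * Rdefinitions.R * nat,
    [/\ (kp < p.2)%N, d c p.1.1 < r / 2, 0 < p.1.2, p.1.2 <= r / 4 &
     forall z, d p.1.1 z < p.1.2 -> d z (iter (n' p.2) T z) < r].
Proof.
move=> Htop c r kp r0.
have r20 : 0 < r / 2 by lra.
have ne : [set y | d c y < r / 2] !=set0 by exists c; rewrite /= d_refl.
have [kW HkW] := Htop _ (@ball_open c (r/2)) ne.
set k := maxn kW kp.+1.
have [z [[y Wy Hyz] Wz]] := HkW k (leq_maxl _ _).
rewrite /= in Wy Wz; subst z.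
set a := r - d y (iter (n' k) T y).
have a0 : 0 < a.
  have := d_tri y c (iter (n' k) T y); rewrite (d_sym y c) /a; lra.
have [de de0 Hde] := @iter_mcont (n' k) y (a/2) ltac:(lra).
exists (y, Order.min (Order.min de (a/2)) (Order.min (r/2 - d c y) (r/4)), k).
split => /=.
- by rewrite leq_max leqnn orbT.
- done.
- rewrite !lt_min; apply/andP; split; apply/andP; split; lra.
- by rewrite ge_min; apply/orP; right; rewrite ge_min lexx orbT.
- move=> w; rewrite !lt_min => /andP[/andP[h1 h2] /andP[h3 h4]].
  have := Hde _ h1. have := d_tri w y (iter (n' k) T y).
  have := d_tri w (iter (n' k) T y) (iter (n' k) T w).
  rewrite (d_sym w y); rewrite /a in h2 *; lra.
Qed.

Lemma core n' : top_quasi_rigid_wrt T n' -> forall c0 r0, 0 < r0 ->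
  exists phi : nat -> nat, exists x, [/\ strict phi, d c0 x < r0 &
     (fun j => iter (n' (phi j)) T x) @ \oo --> x].
Proof.
move=> Htop c0 r0 r00.
have Htot : forall p : X * Rdefinitions.R * nat, exists q : X * Rdefinitions.R * nat,
   0 < p.1.2 -> [/\ (p.2 < q.2)%N, d p.1.1 q.1.1 < p.1.2 / 2, 0 < q.1.2, q.1.2 <= p.1.2 / 4 &
     forall z, d q.1.1 z < q.1.2 -> d z (iter (n' q.2) T z) < p.1.2].
  move=> p; case: (boolP (0 < p.1.2)) => hp.
    have [q Hq] := @step n' Htop p.1.1 p.1.2 p.2 hp; by exists q.
  by exists p.
have [st Hst] := choice Htot.
pose s j := iter j st (c0, r0, 0%N).
pose c j := (s j).1.1. pose r j := (s j).1.2. pose kk j := (s j).2.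
have rpos : forall j, 0 < r j.
  elim=> [//|j IH]; by case: (Hst (s j) IH).
have Hs : forall j, [/\ (kk j < kk j.+1)%N, d (c j) (c j.+1) < r j / 2, 0 < r j.+1,
   r j.+1 <= r j / 4 &
   forall z, d (c j.+1) z < r j.+1 -> d z (iter (n' (kk j.+1)) T z) < r j].
  by move=> j; apply: (Hst (s j) (rpos j)).
have bnd : forall j, (j.+1)%:R * r j <= r0.
  elim=> [|j IH]; first by rewrite mul1r.
  have [_ _ h3 h4 _] := Hs j.
  have HJ : 1 <= (j.+1)%:R :> Rdefinitions.R by rewrite ler1n.
  have rj := rpos j.
  rewrite -addn1 natrD; move: HJ IH h3 h4 rj; set J := (j.+1)%:R; move=> *; nra.
have mono : forall j t, r (j + t)%N <= r j.
  move=> j; elim=> [|t IH]; first by rewrite addn0.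
  rewrite addnS; have [_ _ _ h4 _] := Hs (j + t)%N; have := rpos (j + t)%N; lra.
have cau : forall j t, d (c j) (c (j + t)%N) <= 2/3 * (r j - r (j + t)%N).
  move=> j; elim=> [|t IH]; first by rewrite addn0 d_refl; lra.
  rewrite addnS; have [_ h2 _ h4 _] := Hs (j + t)%N.
  have := d_tri (c j) (c (j + t)%N) (c (j + t).+1); lra.
have small : forall e, 0 < e -> exists N, r N < e.
  move=> e e0; pose N := Num.Def.archi_bound (r0 / e).
  have hN : r0 / e < N%:R by apply: archi_boundP; apply: divr_ge0; lra.
  rewrite ltr_pdivrMr // in hN.
  exists N; have := bnd N; have := rpos N.
  have HN : 0 <= N%:R :> Rdefinitions.R by [].
  rewrite -addn1 natrD; move: hN HN; set M := N%:R; move=> *; nra.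
have ccau : forall e, 0 < e -> exists N, forall a b, (N <= a)%N -> (N <= b)%N -> d (c a) (c b) < e.
  move=> e e0; have [N hN] := small (e / 2) ltac:(lra).
  exists N => a b /subnKC <- /subnKC <-.
  have := cau N (a - N)%N; have := cau N (b - N)%N.
  have := d_tri (c (N + (a - N))%N) (c N) (c (N + (b - N))%N).
  rewrite (d_sym _ (c N)).
  have := rpos (N + (a - N))%N; have := rpos (N + (b - N))%N; lra.
have [x cx] := @dcomp c ccau.
have near : forall j, d (c j) x < r j.
  move=> j; have [N HN] := @cvgE _ _ cx (r j / 3) ltac:(have := rpos j; lra).
  have h := HN (j + N)%N (leq_addl _ _).
  have := cau j N; have := d_tri (c j) (c (j + N)%N) x; rewrite (d_sym x) in h.
  have := rpos (j + N)%N; lra.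
exists (fun j => kk j.+1), x; split.
- by move=> j; case: (Hs j.+1).
- exact: (near 0%N).
- apply: cvgP => e e0; have [N hN] := small e e0.
  exists N => k /subnKC <-.
  have [_ _ _ _ h5] := Hs (N + (k - N))%N.
  have := h5 _ (near _); have := mono N (k - N)%N; lra.
Qed.

Lemma topQR_comp n' phi : top_quasi_rigid_wrt T n' -> strict phi ->
  top_quasi_rigid_wrt T (fun k => n' (phi k)).
Proof.
move=> H Hp U oU neU; have [kU HkU] := H U oU neU.
by exists kU => k Hk; apply: HkU; apply: leq_trans Hk (@strict_ge _ Hp k).
Qed.

Fixpoint NS (F : (nat -> nat) * nat -> (nat -> nat) * X) (n : nat -> nat) (i : nat)
  : nat -> nat :=
  match i with 0 => n | i'.+1 => fun k => NS F n i' ((F (NS F n i', i')).1 k) end.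

Lemma top_to_qr (D : set X) : countable D -> dense D -> forall n, incr_pos_seq n ->
  top_quasi_rigid_wrt T n -> quasi_rigid T.
Proof.
move=> cD dD n [n0 nS] Htop.
case: (EM (exists x : X, True)) => [[x0 _]|nX]; last first.
  exists n; split => //; exists set0; split.
    by move=> O [x _] _; exfalso; apply: nX; exists x.
  by move=> x [].
have cDX : countable (D `*` [set: nat]) := countableX cD (countableP _).
have /countable_injP [f finj] := cDX.
have Hg : forall m, exists p : X * nat,
   (exists p', (D `*` [set: nat]) p' /\ f p' = m) -> (D `*` [set: nat]) p /\ f p = m.
  move=> m; case: (EM (exists p', (D `*` [set: nat]) p' /\ f p' = m)) => [[p' hp']|hn].
    by exists p'.
  by exists (x0, 0%N).
have [g Hg'] := choice Hg.
have gsurj : forall q p, D q -> g (f (q, p)) = (q, p).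
  move=> q p Dq.
  have [h1 h2] := Hg' (f (q, p)) (ex_intro _ (q, p) (conj (conj Dq I) erefl)).
  by apply: finj => //; apply: mem_set => //; split.
have Rtot : forall a : (nat -> nat) * nat, exists b : (nat -> nat) * X,
   top_quasi_rigid_wrt T a.1 -> [/\ strict b.1, d (g a.2).1 b.2 < ((g a.2).2.+1%:R)^-1 &
      (fun j => iter (a.1 (b.1 j)) T b.2) @ \oo --> b.2].
  move=> a; case: (EM (top_quasi_rigid_wrt T a.1)) => [h|h]; last by exists (id, x0).
  have pos : 0 < ((g a.2).2.+1%:R)^-1 :> Rdefinitions.R by rewrite invr_gt0 ltr0Sn.
  have [phi [x [h1 h2 h3]]] := @core a.1 h (g a.2).1 _ pos.
  by exists (phi, x).
have [F HF] := choice Rtot.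
pose N := NS F n.
have inv : forall i, top_quasi_rigid_wrt T (N i) /\ strict (N i).
  elim=> [|i [IH1 IH2]]; first by split.
  have [h1 _ _] := HF (N i, i) IH1.
  split; first exact: (@topQR_comp _ _ IH1 h1).
  by move=> k /=; apply: (@strict_lt _ IH2); apply: h1.
pose xs i := (F (N i, i)).2.
pose m j := N j j.
have rel : forall i t a, exists k, (a <= k)%N /\ N (i.+1 + t)%N a = N i.+1 k.
  move=> i; elim=> [|t IH] a; first by exists a; rewrite addn0.
  rewrite addnS.
  have [h1 _ _] := HF (N (i.+1 + t)%N, (i.+1 + t)%N) (inv _).1.
  have [k [hk Hk]] := IH ((F (N (i.+1 + t)%N, (i.+1 + t)%N)).1 a).
  exists k; split; last exact: Hk.
  exact: leq_trans (@strict_ge _ h1 a) hk.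
have xconv : forall i, (fun j => iter (m j) T (xs i)) @ \oo --> xs i.
  move=> i; have [_ _ hc] := HF (N i, i) (inv i).1.
  move=> A HA; have [K _ HK] := hc A HA.
  exists (maxn K i.+1) => // j /= Hj.
  have Hij : (i.+1 <= j)%N by apply: leq_trans Hj; rewrite leq_maxr.
  rewrite /m -(subnKC Hij).
  have [k [hk Hk]] := rel i (j - i.+1)%N (i.+1 + (j - i.+1))%N.
  rewrite Hk; apply: HK.
  rewrite (subnKC Hij) in hk.
  by apply: leq_trans hk; apply: leq_trans Hj; rewrite leq_maxl.
exists m; split.
  split; first exact: n0.
  move=> k; rewrite /m /=.
  have [h1 _ _] := HF (N k, k) (inv k).1.
  apply: (@strict_lt _ (inv k).2).
  exact: (@strict_ge _ h1 k.+1).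
exists (range xs); split; last by move=> x [i _ <-]; apply: xconv.
move=> O [z Oz] oO.
have [e e0 He] := (proj1 (dtop O) oO) z Oz.
have neB : [set y | d z y < e / 2] !=set0 by exists z; rewrite /= d_refl; lra.
have [q [Bq Dq]] := dD _ neB (@ball_open z (e/2)).
rewrite /= in Bq.
pose p := Num.Def.archi_bound (2 / e).
have hp : 2 / e < p%:R by apply: archi_boundP; apply: divr_ge0; lra.
rewrite ltr_pdivrMr // in hp.
have hp2 : (p.+1%:R)^-1 < e / 2 :> Rdefinitions.R.
  rewrite -[_^-1]mul1r ltr_pdivrMr ?ltr0Sn //.
  have -> : p.+1%:R = p%:R + 1 :> Rdefinitions.R by rewrite natr1.
  move: hp; set P := p%:R; move=> *; nra.
have [_ hi _] := HF (N (f (q, p)), f (q, p)) (inv _).1.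
rewrite gsurj //= in hi.
exists (xs (f (q, p))); split; last by exists (f (q, p)).
have h3 := lt_trans hi hp2.
apply: He; have := d_tri z q (xs (f (q, p))); rewrite /xs; move: Bq h3; clear; move=> *; lra.
Qed.

End QR.

Theorem mainTheorem2 (X : topologicalType) (T : X -> X) :
  separable_space X -> completely_metrizable X -> continuous T ->
  (quasi_rigid T <-> top_quasi_rigid T).
Proof.
move=> [D [cD dD]] [d [dm dtop dcomp]] Tc; split.
- move=> [n [hn [Y [dY HY]]]]; exists n; split => // U oU [u Uu].
  have [y [Uy Yy]] := dY U (ex_intro _ u Uu) oU.
  have [K _ HK] := HY y Yy U (open_nbhs_nbhs (conj oU Uy)).
  exists K => k Hk; exists (iter (n k) T y); split; [by exists y | exact: HK].
- move=> [n [hn Htop]].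
  exact: (@top_to_qr _ _ dm dtop dcomp _ Tc _ cD dD _ hn Htop).
Qed.
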